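(* Let $D$ be an infinite commutative unital integral domain. The images of the monomials in $B$ form a basis of the $D$-module $D\langle X\rangle/I$ (in particular $D\langle X\rangle/I$ is a free $D$-module).
   Context: Let $Y=\{y_1,y_2,\dots\}$ and $Z=\{z_1,z_2,\dots\}$ be disjoint countable sets of variables, $X=Y\cup Z$, and $D\langle X\rangle$ the free unital associative $D$-algebra on $X$, $\mathbb{Z}_2$-graded with the $y_i$ even and the $z_i$ odd. Let $L\langle X\rangle$ be the Lie subalgebra of $D\langle X\rangle$ (bracket $[a,b]=ab-ba$) generated by $X$, with induced grading $L\langle X\rangle^{(0)}\oplus L\langle X\rangle^{(1)}$. An ideal of weak graded identities is a two-sided ideal $J$ of $D\langle X\rangle$ closed under every algebra endomorphism of $D\langle X\rangle$ mapping each $y_i$ into $L\langle X\rangle^{(0)}$ and each $z_i$ into $L\langle X\rangle^{(1)}$; the ideal of weak graded identities generated by a set of polynomials is the smallest such ideal containing it. Let $I$ be the ideal of weak graded identities generated by $y_1y_2-y_2y_1$, $z_1z_2z_3-z_3z_2z_1$ and $y_1z_1+z_1y_1$. Let $B$ be the set of monomials of the forms $y_{a_1}\cdots y_{a_k}$ ($k\ge0$, $a_1\le\dots\le a_k$; $k=0$ gives $1$) and $y_{a_1}\cdots y_{a_k}z_{c_1}z_{d_1}z_{c_2}z_{d_2}\cdots z_{c_m}z_{d_m}$ or $y_{a_1}\cdots y_{a_k}z_{c_1}z_{d_1}\cdots z_{d_{m-1}}z_{c_m}$ (the last odd variable $z_{d_m}$ may be omitted), where $k\ge0$, $m\ge1$,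 $a_1\le\dots\le a_k$, $c_1\le\dots\le c_m$, and the $d_j$ present are nondecreasing. *)

(* Defs.v *)
From HB Require Import structures.
From mathcomp Require Import all_boot all_order all_algebra.
Import GRing.Theory.
Local Open Scope ring_scope.

(* Variables: (false, i) is the even variable y_i, (true, i) is the odd
   variable z_i (i : nat; relabelling of the countable index set). *)
Definition var := (bool * nat)%type.
Definition yv (i : nat) : var := (false, i).
Definition zv (i : nat) : var := (true, i).
Definition word := seq var.

(* Elements of the free algebra D<X> are presented as formal finite sums
   sum_t t.1 * t.2 ; the element they denote is the coefficient function. *)
Definition fpoly (D : Type) := seq (D * word).

Section FreeAlg.
Variable D : comNzRingType.

Definition coef (p : fpoly D) (w : word) : D := \sum_(t <- p | t.2 == w) t.1.

Definition padd (p q : fpoly D) : fpoly D := p ++ q.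
Definition pscale (c : D) (p : fpoly D) : fpoly D := [seq (c * t.1, t.2) | t <- p].
Definition psub (p q : fpoly D) : fpoly D := p ++ pscale (-1) q.
Definition pmul (p q : fpoly D) : fpoly D :=
  [seq (a.1 * b.1, a.2 ++ b.2) | a <- p, b <- q].
Definition pone : fpoly D := [:: (1, [::])].
Definition pvar (x : var) : fpoly D := [:: (1, [:: x])].
Definition pbr (p q : fpoly D) : fpoly D := psub (pmul p q) (pmul q p).

Definition psubst (phi : var -> fpoly D) (p : fpoly D) : fpoly D :=
  flatten [seq pscale t.1 (foldr (fun x acc => pmul (phi x) acc) pone t.2) | t <- p].

Definition zdeg (w : word) : nat := count (fun x : var => x.1) w.
Definition homog_par (b : bool) (f : word -> D) : Prop :=
  forall w, f w != 0 -> odd (zdeg w) = b.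

Definition inLie (f : word -> D) : Prop :=
  forall P : (word -> D) -> Prop,
    (forall x, P (coef (pvar x))) ->
    (forall p q, P (coef p) -> P (coef q) -> P (coef (padd p q))) ->
    (forall c p, P (coef p) -> P (coef (pscale c p))) ->
    (forall p q, P (coef p) -> P (coef q) -> P (coef (pbr p q))) ->
    P f.

Definition admissible (phi : var -> fpoly D) : Prop :=
  forall x : var, inLie (coef (phi x)) /\ homog_par x.1 (coef (phi x)).

Definition weak_ideal (J : (word -> D) -> Prop) : Prop :=
  [/\ J (coef [::]),
      (forall p q, J (coef p) -> J (coef q) -> J (coef (padd p q))),
      (forall a p b, J (coef p) -> J (coef (pmul (pmul a p) b))) &
      (forall phi p, admissible phi -> J (coef p) -> J (coef (psubst phi p)))].

Definition gen1 : fpoly D :=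
  psub (pmul (pvar (yv 1)) (pvar (yv 2))) (pmul (pvar (yv 2)) (pvar (yv 1))).
Definition gen2 : fpoly D :=
  psub (pmul (pmul (pvar (zv 1)) (pvar (zv 2))) (pvar (zv 3)))
       (pmul (pmul (pvar (zv 3)) (pvar (zv 2))) (pvar (zv 1))).
Definition gen3 : fpoly D :=
  padd (pmul (pvar (yv 1)) (pvar (zv 1))) (pmul (pvar (zv 1)) (pvar (yv 1))).

Definition idealI (f : word -> D) : Prop :=
  forall J, weak_ideal J -> J (coef gen1) -> J (coef gen2) -> J (coef gen3) -> J f.

End FreeAlg.
Arguments coef {D}. Arguments padd {D}. Arguments pscale {D}. Arguments psub {D}.
Arguments pmul {D}. Arguments pbr {D}. Arguments psubst {D}. Arguments homog_par {D}.
Arguments inLie {D}. Arguments admissible {D}. Arguments weak_ideal {D}. Arguments idealI {D}.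

Definition evpos (s : seq nat) : seq nat := mask (mkseq (fun i => ~~ odd i) (size s)) s.
Definition odpos (s : seq nat) : seq nat := mask (mkseq (fun i => odd i) (size s)) s.

Definition inB (w : word) : Prop :=
  exists (ys zs : seq nat),
    [/\ w = map yv ys ++ map zv zs, sorted leq ys,
        sorted leq (evpos zs) & sorted leq (odpos zs)].

(* Main.v *)
Require Import Defs.
From mathcomp Require Import all_boot all_order all_algebra.
From mathcomp Require Import zify ring.
From mathcomp Require Import mpoly.
From Stdlib Require Import FunctionalExtensionality.
Set Implicit Arguments. Unset Strict Implicit. Unset Printing Implicit Defensive.
Import GRing.Theory.
Local Open Scope ring_scope.

Section Span.
Variable D : comNzRingType.

Lemma cf_cons (t : D * word) p w :
  coef (t :: p) w = (if t.2 == w then t.1 else 0) + coef p w.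
Proof. by rewrite /coef big_cons; case: ifP => _; rewrite ?add0r. Qed.

Lemma cf_nil w : coef ([::] : fpoly D) w = 0.
Proof. by rewrite /coef big_nil. Qed.

Lemma cf_cat (p q : fpoly D) w : coef (p ++ q) w = coef p w + coef q w.
Proof. by rewrite /coef big_cat. Qed.

Lemma idealI_ext (p q : fpoly D) :
  (forall w, coef p w = coef q w) -> idealI (coef p) -> idealI (coef q).
Proof.
move=> H; have -> : coef q = coef p by apply: functional_extensionality => w; rewrite H.
done.
Qed.

Lemma idealI0 : idealI (coef ([::] : fpoly D)).
Proof. by move=> J [] H0. Qed.

Lemma idealI_add (p q : fpoly D) :
  idealI (coef p) -> idealI (coef q) -> idealI (coef (p ++ q)).
Proof.
move=> Hp Hq J HJ g1 g2 g3; have HJ' := HJ; case: HJ' => _ Ha _ _.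
exact: Ha (Hp J HJ g1 g2 g3) (Hq J HJ g1 g2 g3).
Qed.

Lemma idealI_mul (a p b : fpoly D) :
  idealI (coef p) -> idealI (coef (pmul (pmul a p) b)).
Proof.
move=> Hp J HJ g1 g2 g3; have HJ' := HJ; case: HJ' => _ _ Hm _.
exact: Hm (Hp J HJ g1 g2 g3).
Qed.

Lemma idealI_subst phi (p : fpoly D) :
  admissible phi -> idealI (coef p) -> idealI (coef (psubst phi p)).
Proof.
move=> Ha Hp J HJ g1 g2 g3; have HJ' := HJ; case: HJ' => _ _ _ Hs.
exact: Hs Ha (Hp J HJ g1 g2 g3).
Qed.

Lemma idealI_g1 : idealI (coef (gen1 D)). Proof. by move=> J _ g1. Qed.
Lemma idealI_g2 : idealI (coef (gen2 D)). Proof. by move=> J _ _ g2. Qed.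
Lemma idealI_g3 : idealI (coef (gen3 D)). Proof. by move=> J _ _ _ g3. Qed.

Definition Rel (u : word) (s : D) (v : word) := idealI (coef [:: (1, u); (- s, v)]).

Lemma Rel_refl u : Rel u 1 u.
Proof.
apply: idealI_ext idealI0 => w; rewrite !cf_cons cf_nil /=.
by case: (u == w); rewrite ?addr0 ?subrr.
Qed.

Lemma Rel_ctx a b u s v : Rel u s v -> Rel (a ++ u ++ b) s (a ++ v ++ b).
Proof.
move=> H; have := idealI_mul [:: (1, a)] [:: (1, b)] H.
apply: idealI_ext => w; rewrite !cf_cons !cf_nil /= !catA !mulr1 !mul1r.
done.
Qed.

Lemma Rel_pre a u s v : Rel u s v -> Rel (a ++ u) s (a ++ v).
Proof. by move=> /(Rel_ctx a [::]); rewrite !cats0. Qed.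

Lemma Rel_suf b u s v : Rel u s v -> Rel (u ++ b) s (v ++ b).
Proof. by move=> /(Rel_ctx [::] b). Qed.

Lemma Rel_trans u s v s' w : Rel u s v -> Rel v s' w -> Rel u (s * s') w.
Proof.
move=> H1 H2; have := idealI_add H1 (idealI_mul [:: (s, [::])] [:: (1, [::])] H2).
apply: idealI_ext => w0; rewrite /= !cf_cons !cf_nil /= !cats0.
case: (u == w0); case: (v == w0); case: (w == w0); ring.
Qed.

Lemma Rel_eq u s s' v : s = s' -> Rel u s v -> Rel u s' v.
Proof. by move=> ->. Qed.

Lemma Rel_trans1 u v w : Rel u 1 v -> Rel v 1 w -> Rel u 1 w.
Proof. by move=> H1 H2; apply: Rel_eq (Rel_trans H1 H2); rewrite mulr1. Qed.

Lemma admissible_ren (f : var -> var) :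
  (forall x, (f x).1 = x.1) -> admissible (fun x => pvar D (f x)).
Proof.
move=> Hf x; split; first by move=> P Hv _ _ _; apply: Hv.
move=> w; rewrite /coef big_cons big_nil /=.
case: ([:: f x] =P w) => [<- _|]; last by rewrite eqxx.
by rewrite /zdeg /= addn0 Hf; case: (x.1).
Qed.

Lemma Rel_y i j : Rel [:: yv i; yv j] 1 [:: yv j; yv i].
Proof.
pose f (x : var) := if x == yv 1 then yv i else if x == yv 2 then yv j else x.
have Hf : forall x, (f x).1 = x.1.
  by move=> x; rewrite /f; do 2 (case: ifP => [/eqP -> //|_]).
have := idealI_subst (admissible_ren Hf) idealI_g1.
apply: idealI_ext => w; rewrite /gen1 /psubst /f /=.
rewrite !cf_cons !cf_nil /=.
case: ([:: yv i; yv j] == w); case: ([:: yv j; yv i] == w); ring.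
Qed.

Lemma Rel_z a b c : Rel [:: zv a; zv b; zv c] 1 [:: zv c; zv b; zv a].
Proof.
pose f (x : var) := if x == zv 1 then zv a else if x == zv 2 then zv b
   else if x == zv 3 then zv c else x.
have Hf : forall x, (f x).1 = x.1.
  by move=> x; rewrite /f; do 3 (case: ifP => [/eqP -> //|_]).
have := idealI_subst (admissible_ren Hf) idealI_g2.
apply: idealI_ext => w; rewrite /gen2 /psubst /f /=.
rewrite !cf_cons !cf_nil /=.
case: (_ == w); case: (_ == w); ring.
Qed.

Lemma Rel_zy j i : Rel [:: zv j; yv i] (-1) [:: yv i; zv j].
Proof.
pose f (x : var) := if x == yv 1 then yv i else if x == zv 1 then zv j else x.
have Hf : forall x, (f x).1 = x.1.
  by move=> x; rewrite /f; do 2 (case: ifP => [/eqP -> //|_]).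
have := idealI_subst (admissible_ren Hf) idealI_g3.
apply: idealI_ext => w; rewrite /gen3 /psubst /f /=.
rewrite !cf_cons !cf_nil /=.
case: (_ == w); case: (_ == w); ring.
Qed.

End Span.

Fixpoint ins (c : nat) (s : seq nat) : seq nat :=
  match s with
  | [::] => [:: c]
  | x :: s' => if (c <= x)%N then c :: x :: s' else x :: ins c s'
  end.
Definition isort (s : seq nat) := foldr ins [::] s.

Lemma path_ins a c s : (a <= c)%N -> path leq a s -> path leq a (ins c s).
Proof.
elim: s a => [|x s IH] a ac /=; first by rewrite ac.
case/andP=> ax ps; case: ifP => cx /=; first by rewrite ac cx.
by rewrite ax IH // ltnW // ltnNge cx.
Qed.

Lemma sorted_ins c s : sorted leq s -> sorted leq (ins c s).
Proof.
case: s => [|x s] //= ps; case: ifP => cx /=; first by rewrite cx.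
by apply: path_ins => //; rewrite ltnW // ltnNge cx.
Qed.

Lemma sorted_isort s : sorted leq (isort s).
Proof. by elim: s => //= x s IH; apply: sorted_ins. Qed.

Fixpoint insE (c : nat) (L : seq nat) : seq nat :=
  match L with
  | d :: c' :: R' => if (c <= c')%N then c :: L else c' :: d :: insE c R'
  | _ => c :: L
  end.

Fixpoint sortE (L : seq nat) : seq nat :=
  match L with
  | c :: d :: R => insE c (d :: sortE R)
  | _ => L
  end.

Definition nfz (zs : seq nat) : seq nat :=
  match sortE zs with c :: T => c :: sortE T | [::] => [::] end.

Lemma ind2 (P : seq nat -> Prop) : P [::] -> (forall x, P [:: x]) ->
  (forall x y s, P s -> P (x :: y :: s)) -> forall s, P s.
Proof.
move=> H0 H1 H2 s; suff: P s /\ forall x, P (x :: s) by case.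
elim: s => [|y s [IH1 IH2]]; first by split.
by split=> // x; apply: H2.
Qed.

Lemma evpos_nil : evpos [::] = [::]. Proof. by []. Qed.
Lemma odpos_nil : odpos [::] = [::]. Proof. by []. Qed.

Lemma evposC x s : evpos (x :: s) = x :: odpos s.
Proof.
rewrite /evpos /odpos /mkseq /= (iotaDl 1 0) -map_comp.
by congr (_ :: mask _ _); apply: eq_map => i /=; rewrite /= ?negbK.
Qed.

Lemma odposC x s : odpos (x :: s) = evpos s.
Proof.
rewrite /evpos /odpos /mkseq /= (iotaDl 1 0) -map_comp.
by congr (mask _ _); apply: eq_map => i /=; rewrite ?negbK.
Qed.

Arguments evpos : simpl never.
Arguments odpos : simpl never.

Lemma insE_pos c L : sorted leq (odpos L) ->
  evpos (insE c L) = ins c (odpos L) /\ odpos (insE c L) = evpos L.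
Proof.
elim/ind2: L c => [|d|d c' R IH] c.
- by [].
- by rewrite /= !odposC !evposC.
rewrite [insE _ _]/= !odposC !evposC => srt.
have srt' : sorted leq (odpos R) by move: srt => /= /path_sorted.
case: ifP => cc.
  by do 4 rewrite ?evposC ?odposC; rewrite /= cc.
do 4 rewrite ?evposC ?odposC; have [-> ->] := IH c srt'.
by rewrite /= cc.
Qed.

Lemma sortE_pos L : sorted leq (evpos (sortE L)) /\ odpos (sortE L) = odpos L.
Proof.
elim/ind2: L => [|x|c d R [IH1 IH2]] //=.
have Hs : sorted leq (odpos (d :: sortE R)) by rewrite odposC.
have [-> ->] := insE_pos c Hs.
by rewrite odposC sorted_ins //; do 4 rewrite ?evposC ?odposC; rewrite IH2.
Qed.

Lemma nfz_pos zs : sorted leq (evpos (nfz zs)) /\ sorted leq (odpos (nfz zs)).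
Proof.
rewrite /nfz; have [H1 _] := sortE_pos zs; move: H1.
case: (sortE zs) => [|c T] //.
move=> H1; have [H2 H3] := sortE_pos T.
rewrite evposC in H1; rewrite evposC odposC H3; split => //.
Qed.

Section Rels.
Variable D : comNzRingType.

Lemma Rel_ins y s : Rel (map yv (y :: s)) (1 : D) (map yv (ins y s)).
Proof.
elim: s => [|x s IH] /=; first exact: Rel_refl.
case: ifP => _; first exact: Rel_refl.
apply: Rel_trans1 (Rel_suf (map yv s) (Rel_y (D:=D) y x)) _.
exact: (Rel_pre [:: yv x] IH).
Qed.

Lemma Rel_isort s : Rel (map yv s) (1 : D) (map yv (isort s)).
Proof.
elim: s => [|y s IH] /=; first exact: Rel_refl.
apply: Rel_trans1 (Rel_pre [:: yv y] IH) _.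
exact: Rel_ins.
Qed.

Lemma Rel_insE c L : Rel (map zv (c :: L)) (1 : D) (map zv (insE c L)).
Proof.
elim/ind2: L c => [|d|d c' R IH] c /=; try exact: Rel_refl.
case: ifP => _; first exact: Rel_refl.
apply: Rel_trans1 (Rel_suf (map zv R) (Rel_z (D:=D) c d c')) _.
exact: (Rel_pre [:: zv c'; zv d] (IH c)).
Qed.

Lemma Rel_sortE L : Rel (map zv L) (1 : D) (map zv (sortE L)).
Proof.
elim/ind2: L => [|x|c d R IH] /=; try exact: Rel_refl.
apply: Rel_trans1 (Rel_pre [:: zv c; zv d] IH) _.
exact: (Rel_insE c (d :: sortE R)).
Qed.

Lemma Rel_nfz L : Rel (map zv L) (1 : D) (map zv (nfz L)).
Proof.
apply: Rel_trans1 (Rel_sortE L) _; rewrite /nfz.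
case: (sortE L) => [|c T]; first exact: Rel_refl.
exact: (Rel_pre [:: zv c] (Rel_sortE T)).
Qed.

Lemma Rel_ymove ys j zs :
  Rel (zv j :: map yv ys ++ zs) ((-1 : D) ^+ size ys) (map yv ys ++ zv j :: zs).
Proof.
elim: ys => [|i ys IH] /=; first exact: Rel_refl.
have H := Rel_trans (Rel_suf (map yv ys ++ zs) (Rel_zy (D:=D) j i))
                 (Rel_pre [:: yv i] IH).
by rewrite exprS.
Qed.

Lemma split_word w : exists s ys zs, Rel w (s : D) (map yv ys ++ map zv zs).
Proof.
elim: w => [|x w [s [ys [zs IH]]]]; first by exists 1, [::], [::]; exact: Rel_refl.
have H := Rel_pre [:: x] IH.
case: x H => [[] j] H.
  exists (s * (-1) ^+ size ys), ys, (j :: zs).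
  exact: Rel_trans H (Rel_ymove ys j (map zv zs)).
by exists s, (j :: ys), zs.
Qed.

Lemma normal_word w : exists s w', inB w' /\ Rel w (s : D) w'.
Proof.
have [s [ys [zs H]]] := split_word w.
exists (s * 1 * 1), (map yv (isort ys) ++ map zv (nfz zs)); split.
  have [h1 h2] := nfz_pos zs.
  by exists (isort ys), (nfz zs); split => //; apply: sorted_isort.
apply: Rel_trans (Rel_pre (map yv (isort ys)) (Rel_nfz zs)).
exact: Rel_trans H (Rel_suf (map zv zs) (Rel_isort ys)).
Qed.

Theorem spanning (f : fpoly D) : exists p : fpoly D,
  (forall t, t \in p -> inB t.2) /\ idealI (coef (psub f p)).
Proof.
elim: f => [|t f [p [Hp IH]]]; first by exists [::]; split => //; exact: idealI0.
have [s [w' [Hb Hr]]] := normal_word t.2.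
exists ((t.1 * s, w') :: p); split.
  by move=> u; rewrite inE => /orP [/eqP -> //|]; apply: Hp.
have := idealI_add (idealI_mul [:: (t.1, [::])] [:: (1, [::])] Hr) IH.
apply: idealI_ext => w0; rewrite /psub /pscale /= !cf_cons !cf_cat /= !cf_cons ?cf_nil !cats0 /=.
case: (t.2 == w0); case: (w' == w0); ring.
Qed.

End Rels.

Section Model.
Variable D : comNzRingType.
Variable n : nat.
Local Notation R := {mpoly D[n]}.
Local Notation M := 'M[R]_2.

Definition i0 : 'I_2 := ord0.
Definition i1 : 'I_2 := ord_max.

Lemma I2P (i : 'I_2) : i = i0 \/ i = i1.
Proof. by case: i => [[|[|k]] Hk]; [left|right|]; try apply: val_inj. Qed.

Lemma mul2 (A B : M) i j : (A * B) i j = A i i0 * B i0 j + A i i1 * B i1 j.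
Proof.
rewrite -mulmxE mxE big_ord_recl big_ord_recl big_ord0 addr0.
by congr (_ * _ + _ * _); congr (_ _ _); apply: val_inj.
Qed.

Lemma one2 i j : (1 : M) i j = (i == j)%:R.
Proof. by rewrite mxE. Qed.

Lemma addE (A B : M) i j : (A + B) i j = A i j + B i j.
Proof. by rewrite mxE. Qed.
Lemma oppE (A : M) i j : (- A) i j = - A i j.
Proof. by rewrite mxE. Qed.
Lemma sclE c (A : M) i j : (c *: A) i j = c * A i j.
Proof. by rewrite mxE. Qed.

Definition isD (A : M) := A i0 i1 = 0 /\ A i1 i0 = 0.
Definition isO (A : M) := A i0 i0 = 0 /\ A i1 i1 = 0.
Definition tr0 (A : M) := A i0 i0 + A i1 i1 = 0.
Definition good (e : var -> M) :=
  forall i, [/\ isD (e (yv i)), tr0 (e (yv i)) & isO (e (zv i))].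

Definition evalW (e : var -> M) (w : word) : M := \prod_(x <- w) e x.
Definition evalP (e : var -> M) (p : fpoly D) : M :=
  \sum_(t <- p) t.1%:MP *: evalW e t.2.

Lemma evalW_cat e u v : evalW e (u ++ v) = evalW e u * evalW e v.
Proof. by rewrite /evalW big_cat. Qed.

Lemma evalP_cat e p q : evalP e (p ++ q) = evalP e p + evalP e q.
Proof. by rewrite /evalP big_cat. Qed.

Lemma evalP_nil e : evalP e [::] = 0.
Proof. by rewrite /evalP big_nil. Qed.

Lemma evalP_scale e c p : evalP e (pscale c p) = c%:MP *: evalP e p.
Proof.
rewrite /evalP /pscale big_map scaler_sumr; apply: eq_bigr => t _ /=.
by rewrite rmorphM scalerA.
Qed.

Lemma evalP_mul e p q : evalP e (pmul p q) = evalP e p * evalP e q.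
Proof.
rewrite /evalP /pmul big_allpairs_dep /= mulr_suml; apply: eq_bigr => a _.
rewrite mulr_sumr; apply: eq_bigr => b _ /=.
by rewrite evalW_cat rmorphM -scalerAl -scalerAr scalerA.
Qed.

Lemma evalP_foldr e (phi : var -> fpoly D) (w : word) :
  evalP e (foldr (fun x acc => pmul (phi x) acc) (pone D) w) =
  \prod_(x <- w) evalP e (phi x).
Proof.
elim: w => [|x w IH] /=.
  by rewrite big_nil /evalP big_cons big_nil addr0 /evalW big_nil mpolyC1 scale1r.
by rewrite evalP_mul IH big_cons.
Qed.

Lemma evalP_subst e (phi : var -> fpoly D) p :
  evalP e (psubst phi p) = evalP (fun x => evalP e (phi x)) p.
Proof.
rewrite /psubst /evalP big_flatten /= big_map; apply: eq_bigr => t _.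
by rewrite -/(evalP e _) evalP_scale evalP_foldr.
Qed.

Lemma evalP_coef e (p : fpoly D) (S : seq word) : uniq S ->
  (forall t, t \in p -> t.2 \in S) ->
  evalP e p = \sum_(w <- S) (coef p w)%:MP *: evalW e w.
Proof.
move=> uS HS.
transitivity (\sum_(w <- S) \sum_(t <- p | t.2 == w) t.1%:MP *: evalW e t.2); last first.
  apply: eq_bigr => w _; rewrite /coef rmorph_sum scaler_suml.
  by apply: eq_bigr => t /eqP ->.
under eq_bigr do rewrite big_mkcond.
rewrite exchange_big /evalP; apply: eq_big_seq => t tp.
rewrite (big_rem (t.2) (HS t tp)) eqxx big1_seq /=; first by rewrite addr0.
move=> w; rewrite ?andTb => wr; case: eqP => // Ew.
by move: wr; rewrite -Ew mem_rem_uniqF.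
Qed.

Lemma evalP_ext e (p q : fpoly D) : (forall w, coef p w = coef q w) ->
  evalP e p = evalP e q.
Proof.
move=> H; set S := undup (map snd p ++ map snd q).
have uS : uniq S by apply: undup_uniq.
rewrite (evalP_coef e uS) ?(evalP_coef e uS (p := q)).
- by apply: eq_bigr => w _; rewrite H.
- by move=> t tq; rewrite mem_undup mem_cat (map_f snd tq) orbT.
- by move=> t tp; rewrite mem_undup mem_cat (map_f snd tp).
Qed.

Lemma isD_mul A B : isD A -> isD B -> isD (A * B).
Proof. by move=> [a1 a2] [b1 b2]; split; rewrite mul2 ?a1 ?a2 ?b1 ?b2 ?mulr0 ?mul0r ?addr0. Qed.
Lemma isDO_mul A B : isD A -> isO B -> isO (A * B).
Proof. by move=> [a1 a2] [b1 b2]; split; rewrite mul2 ?a1 ?a2 ?b1 ?b2 ?mulr0 ?mul0r ?addr0. Qed.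
Lemma isOD_mul A B : isO A -> isD B -> isO (A * B).
Proof. by move=> [a1 a2] [b1 b2]; split; rewrite mul2 ?a1 ?a2 ?b1 ?b2 ?mulr0 ?mul0r ?addr0. Qed.
Lemma isO_mul A B : isO A -> isO B -> isD (A * B).
Proof. by move=> [a1 a2] [b1 b2]; split; rewrite mul2 ?a1 ?a2 ?b1 ?b2 ?mulr0 ?mul0r ?addr0. Qed.

Definition isPar (b : bool) (A : M) := if b then isO A else isD A.

Lemma isPar0 b : isPar b 0.
Proof. by case: b; split; rewrite mxE. Qed.
Lemma isParD b A B : isPar b A -> isPar b B -> isPar b (A + B).
Proof. by case: b => -[a1 a2] [b1 b2]; split; rewrite mxE ?a1 ?a2 ?b1 ?b2 addr0. Qed.
Lemma isParZ b c A : isPar b A -> isPar b (c *: A).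
Proof. by case: b => -[a1 a2]; split; rewrite mxE ?a1 ?a2 mulr0. Qed.

Lemma zdeg_cons (x : var) w : zdeg (x :: w) = (x.1 + zdeg w)%N.
Proof. by []. Qed.

Lemma evalW_par e w : good e -> isPar (odd (zdeg w)) (evalW e w).
Proof.
move=> He; elim: w => [|[b i] w IH].
  by rewrite /evalW big_nil /=; split; rewrite one2.
rewrite /evalW big_cons -/(evalW e w) zdeg_cons /=.
have [Dy _ Oz] := He i.
case: b => /=; case: (odd (zdeg w)) IH => /= IH.
- exact: isO_mul.
- exact: isOD_mul.
- exact: isDO_mul.
- exact: isD_mul.
Qed.

Lemma homog_eval e b (q : fpoly D) : good e -> homog_par b (coef q) ->
  isPar b (evalP e q).
Proof.
move=> He Hh.
have Hs : forall t, t \in q -> t.2 \in undup (map snd q).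
  by move=> t tq; rewrite mem_undup (map_f snd tq).
rewrite (evalP_coef e (undup_uniq _) Hs).
apply: (@big_ind _ (isPar b)); [exact: isPar0 | exact: isParD |] => w _.
have [->|nz] := eqVneq (coef q w) 0; first by rewrite rmorph0 scale0r; exact: isPar0.
by apply: isParZ; rewrite -(Hh w nz); apply: evalW_par.
Qed.

Lemma evalP_pvar e x : evalP e (pvar D x) = e x.
Proof. by rewrite /evalP /evalW big_cons big_nil big_cons big_nil addr0 mulr1 mpolyC1 scale1r. Qed.

Lemma lie_tr0 e (q : fpoly D) : good e -> inLie (coef q) -> tr0 (evalP e q).
Proof.
move=> He Hl.
suff: forall q', coef q' = coef q -> tr0 (evalP e q') by apply.
apply: (Hl (fun g => forall q', coef q' = g -> tr0 (evalP e q'))).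
- move=> x q' Hq; rewrite (evalP_ext e (q := pvar D x)) ?Hq // evalP_pvar.
  case: x {Hq} => -[] i; have [_ T [o1 o2]] := He i => //.
  by rewrite /tr0 o1 o2 addr0.
- move=> p1 p2 H1 H2 q' Hq; rewrite (evalP_ext e (q := padd p1 p2)) ?Hq //.
  rewrite /padd evalP_cat /tr0 !mxE.
  by rewrite addrACA (H1 p1 erefl) (H2 p2 erefl) addr0.
- move=> c p1 H1 q' Hq; rewrite (evalP_ext e (q := pscale c p1)) ?Hq //.
  by rewrite evalP_scale /tr0 !mxE -mulrDr (H1 p1 erefl) mulr0.
- move=> p1 p2 _ _ q' Hq; rewrite (evalP_ext e (q := pbr p1 p2)) ?Hq //.
  rewrite /pbr /psub evalP_cat evalP_scale !evalP_mul /tr0 rmorphN1 scaleN1r.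
  by rewrite !addE !oppE !mul2; ring.
Qed.

Lemma good_subst e (phi : var -> fpoly D) : good e -> admissible phi ->
  good (fun x => evalP e (phi x)).
Proof.
move=> He Ha i; have [L0 H0] := Ha (yv i); have [_ H1] := Ha (zv i).
split.
- exact: (homog_eval He H0).
- exact: lie_tr0.
- exact: (homog_eval He H1).
Qed.

Definition Jm (f : word -> D) :=
  forall q, coef q = f -> forall e, good e -> evalP e q = 0.

Lemma Jm_coef p : Jm (coef p) -> forall e, good e -> evalP e p = 0.
Proof. by move=> H; apply: H. Qed.

Lemma Jm_weak : weak_ideal Jm.
Proof.
split.
- move=> q Hq e He; rewrite (evalP_ext e (q := [::])) ?Hq // evalP_nil //.
- move=> p q Hp Hq r Hr e He; rewrite (evalP_ext e (q := padd p q)) ?Hr //.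
  by rewrite evalP_cat (Hp p erefl e He) (Hq q erefl e He) addr0.
- move=> a p b Hp r Hr e He; rewrite (evalP_ext e (q := pmul (pmul a p) b)) ?Hr //.
  by rewrite !evalP_mul (Hp p erefl e He) mulr0 mul0r.
- move=> phi p Ha Hp r Hr e He; rewrite (evalP_ext e (q := psubst phi p)) ?Hr //.
  by rewrite evalP_subst; apply: Hp => //; apply: good_subst.
Qed.

Lemma tr0E A : tr0 A -> A i1 i1 = - A i0 i0.
Proof. by move=> H; apply/eqP; rewrite -addr_eq0 addrC H. Qed.

Lemma zeroE i j : (0 : M) i j = 0.
Proof. by rewrite mxE. Qed.

Lemma Jm_g1 : Jm (coef (gen1 D)).
Proof.
move=> q Hq e He; rewrite (evalP_ext e (q := gen1 D)) ?Hq //.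
rewrite /gen1 /psub evalP_cat evalP_scale !evalP_mul !evalP_pvar rmorphN1 scaleN1r.
have [[a1 a2] /tr0E ta _] := He 1%N; have [[b1 b2] /tr0E tb _] := He 2%N.
apply/matrixP => i j; rewrite !addE !oppE !mul2 zeroE.
by case: (I2P i) => ->; case: (I2P j) => ->; rewrite ?a1 ?a2 ?b1 ?b2 ?ta ?tb; ring.
Qed.

Lemma Jm_g2 : Jm (coef (gen2 D)).
Proof.
move=> q Hq e He; rewrite (evalP_ext e (q := gen2 D)) ?Hq //.
rewrite /gen2 /psub evalP_cat evalP_scale !evalP_mul !evalP_pvar rmorphN1 scaleN1r.
have [_ _ [a1 a2]] := He 1%N; have [_ _ [b1 b2]] := He 2%N; have [_ _ [c1 c2]] := He 3%N.
apply/matrixP => i j; rewrite !addE !oppE !mul2 zeroE.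
by case: (I2P i) => ->; case: (I2P j) => ->; rewrite ?a1 ?a2 ?b1 ?b2 ?c1 ?c2; ring.
Qed.

Lemma Jm_g3 : Jm (coef (gen3 D)).
Proof.
move=> q Hq e He; rewrite (evalP_ext e (q := gen3 D)) ?Hq //.
rewrite /gen3 /padd evalP_cat !evalP_mul !evalP_pvar.
have [[a1 a2] /tr0E ta [b1 b2]] := He 1%N.
apply/matrixP => i j; rewrite !addE !mul2 zeroE.
by case: (I2P i) => ->; case: (I2P j) => ->; rewrite ?a1 ?a2 ?b1 ?b2 ?ta; ring.
Qed.

Lemma idealI_eval (p : fpoly D) : idealI (coef p) -> forall e, good e -> evalP e p = 0.
Proof.
move=> H e He; exact: (Jm_coef (H Jm Jm_weak Jm_g1 Jm_g2 Jm_g3)) He.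
Qed.
End Model.

Arguments evpos : simpl never.
Arguments odpos : simpl never.

Section Generic.
Variable D : comNzRingType.
Variable N : nat.
Local Notation n := (3 * N).+1.
Local Notation R := {mpoly D[n]}.
Local Notation M := 'M[R]_2.

Definition iy (c : nat) : 'I_n := inord (3 * c + 0).
Definition ia (c : nat) : 'I_n := inord (3 * c + 1).
Definition ib (c : nat) : 'I_n := inord (3 * c + 2).

Definition Xv (k : 'I_n) : R := 'X_[mnm1 k].

Definition ge (x : var) : M :=
  if x.1 then \matrix_(i < 2, j < 2)
                (if i == j then 0 else if i == i0 then Xv (ia x.2) else Xv (ib x.2))
  else \matrix_(i < 2, j < 2)
                (if i == j then (if i == i0 then Xv (iy x.2) else - Xv (iy x.2)) else 0).

Lemma good_ge : good ge.
Proof.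
move=> i; split; rewrite /isD /tr0 /isO /ge /= ?mxE //=.
by rewrite subrr.
Qed.

Lemma gez00 c : ge (zv c) i0 i0 = 0. Proof. by rewrite /ge mxE. Qed.
Lemma gez01 c : ge (zv c) i0 i1 = Xv (ia c). Proof. by rewrite /ge mxE. Qed.
Lemma gez10 c : ge (zv c) i1 i0 = Xv (ib c). Proof. by rewrite /ge mxE. Qed.
Lemma gez11 c : ge (zv c) i1 i1 = 0. Proof. by rewrite /ge mxE. Qed.
Lemma gey00 c : ge (yv c) i0 i0 = Xv (iy c). Proof. by rewrite /ge mxE. Qed.
Lemma gey01 c : ge (yv c) i0 i1 = 0. Proof. by rewrite /ge mxE. Qed.

Fixpoint cnt (b : bool) (w : word) (k : 'I_n) : nat :=
  match w with
  | [::] => 0%N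
  | x :: w' => if x.1 then (((if b then ib x.2 else ia x.2) == k) + cnt (~~ b) w' k)%N
               else ((iy x.2 == k) + cnt b w' k)%N
  end.

Definition mon (b : bool) (w : word) : 'X_{1..n} := [multinom cnt b w k | k < n].

Lemma mon_cons_y b c w : mon b (yv c :: w) = mnm_add (mnm1 (iy c)) (mon b w).
Proof. by apply/mnmP => k; rewrite !mnmE /=. Qed.

Lemma mon_cons_z b c w :
  mon b (zv c :: w) = mnm_add (mnm1 (if b then ib c else ia c)) (mon (~~ b) w).
Proof. by apply/mnmP => k; rewrite !mnmE /=. Qed.

Lemma mon_nil b : mon b [::] = mnm0.
Proof. by apply/mnmP => k; rewrite !mnmE. Qed.

Definition ib2 (b : bool) : 'I_2 := if b then i1 else i0.

Lemma evalW_cons (e : var -> M) x w : evalW e (x :: w) = e x * evalW e w.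
Proof. by rewrite /evalW big_cons. Qed.

Lemma rowZ zs b j : evalW ge (map zv zs) (ib2 b) j =
  if j == ib2 (b (+) odd (size zs)) then 'X_[mon b (map zv zs)] else 0.
Proof.
elim: zs b j => [|c zs IH] b j /=.
  rewrite /evalW big_nil one2 mon_nil mpolyX0 addbF eq_sym.
  by case: (j == ib2 b).
rewrite evalW_cons mul2 mon_cons_z mpolyXD.
case: b => /=.
- rewrite gez10 gez11 mul0r addr0 (IH false) /=.
  by rewrite negbK; case: (j == _); rewrite ?mulr0.
- rewrite gez00 gez01 mul0r add0r (IH true) /=.
  by case: (j == _) => //; rewrite ?mulr0.
Qed.

Lemma rowYZ ys zs j : evalW ge (map yv ys ++ map zv zs) i0 j =
  if j == ib2 (odd (size zs)) then 'X_[mon false (map yv ys ++ map zv zs)] else 0.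
Proof.
elim: ys j => [|c ys IH] j /=; first exact: (rowZ zs false j).
rewrite evalW_cons mul2 mon_cons_y mpolyXD IH gey00 gey01.
by rewrite mul0r addr0; case: (j == _); rewrite ?mulr0.
Qed.

Lemma row_sum ys zs : let w := map yv ys ++ map zv zs in
  evalW ge w i0 i0 + evalW ge w i0 i1 = 'X_[mon false w].
Proof.
by rewrite /= !rowYZ; case: (odd (size zs)) => /=; rewrite ?add0r ?addr0.
Qed.


Lemma cnt_idx (s : seq nat) r r' v : (r <= 2)%N -> (r' <= 2)%N -> (v < N)%N ->
  all (fun c => c < N)%N s ->
  count (fun c => (inord (3 * c + r) : 'I_n) == inord (3 * v + r')) s =
  if r == r' then count_mem v s else 0%N.
Proof.
move=> hr hr' hv hs; case: eqP => [<-|ne].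
  apply: eq_in_count => c /(allP hs) hc /=.
  rewrite -val_eqE /= !inordK; lia.
transitivity (count pred0 s); last exact: count_pred0.
apply: eq_in_count => c /(allP hs) hc /=.
rewrite -val_eqE /= !inordK; try lia.

Qed.

Lemma cnt_y b ys w k : cnt b (map yv ys ++ w) k = (count (fun c => iy c == k) ys + cnt b w k)%N.
Proof. by elim: ys => [|c ys IH] //=; rewrite IH addnA. Qed.

Lemma cnt_z b zs k : cnt b (map zv zs) k =
  (count (fun c => (if b then ib c else ia c) == k) (evpos zs) +
   count (fun c => (if b then ia c else ib c) == k) (odpos zs))%N.
Proof.
elim: zs b => [|c zs IH] b; first by rewrite evpos_nil odpos_nil.
rewrite [cnt _ _ _]/= IH evposC odposC /=. case: b => /=; lia.
Qed.


Lemma ev_od_inj (s1 s2 : seq nat) : evpos s1 = evpos s2 -> odpos s1 = odpos s2 -> s1 = s2.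
Proof.
elim: s1 s2 => [|x s1 IH] [|y s2] //.
rewrite !evposC !odposC => -[-> h1] h2.
by rewrite (IH s2).
Qed.

Definition bnd (w : word) := all (fun x : var => x.2 < N)%N w.

Lemma perm_counts (s1 s2 : seq nat) : (forall v, count_mem v s1 = count_mem v s2) -> perm_eq s1 s2.
Proof. by move=> H; apply/allP => x _; rewrite /= H. Qed.

Lemma sorted_counts (s1 s2 : seq nat) : sorted leq s1 -> sorted leq s2 ->
  all (fun c => c < N)%N s1 -> all (fun c => c < N)%N s2 ->
  (forall v, (v < N)%N -> count_mem v s1 = count_mem v s2) -> s1 = s2.
Proof.
move=> h1 h2 b1 b2 H; apply: (sorted_eq leq_trans anti_leq h1 h2).
apply: perm_counts => v; case: (ltnP v N) => hv; first exact: H.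
rewrite !(count_memPn _) //; apply/negP => /[dup] vin.
- by move/(allP b2) => /=; rewrite ltnNge hv.
- by move/(allP b1) => /=; rewrite ltnNge hv.
Qed.

Lemma all_mask (m : bitseq) (s : seq nat) : all (fun c => c < N)%N s -> all (fun c => c < N)%N (mask m s).
Proof. by move=> /allP H; apply/allP => x /mem_mask /H. Qed.

Lemma cnt_w ys zs r v : (r <= 2)%N -> (v < N)%N ->
  all (fun c => c < N)%N ys -> all (fun c => c < N)%N zs ->
  cnt false (map yv ys ++ map zv zs) (inord (3 * v + r)) =
    ((if 0 == r then count_mem v ys else 0) + ((if 1 == r then count_mem v (evpos zs) else 0)
      + (if 2 == r then count_mem v (odpos zs) else 0)))%N.
Proof.
move=> hr hv hy hz; rewrite cnt_y cnt_z /iy /ia /ib.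
by rewrite !cnt_idx // ?all_mask.
Qed.

Lemma mon_inj ys1 zs1 ys2 zs2 :
  let w1 := map yv ys1 ++ map zv zs1 in let w2 := map yv ys2 ++ map zv zs2 in
  sorted leq ys1 -> sorted leq (evpos zs1) -> sorted leq (odpos zs1) ->
  sorted leq ys2 -> sorted leq (evpos zs2) -> sorted leq (odpos zs2) ->
  bnd w1 -> bnd w2 -> mon false w1 = mon false w2 -> w1 = w2.
Proof.
move=> w1 w2 sy1 se1 so1 sy2 se2 so2 bw1 bw2 /mnmP Hm.
have Hc : forall k, cnt false w1 k = cnt false w2 k by move=> k; have := Hm k; rewrite !mnmE.
move: bw1 bw2; rewrite /bnd /w1 /w2 !all_cat !all_map => /andP [by1 bz1] /andP [by2 bz2].
have by1' : all (fun c => c < N)%N ys1 by apply: sub_all by1.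
have by2' : all (fun c => c < N)%N ys2 by apply: sub_all by2.
have bz1' : all (fun c => c < N)%N zs1 by apply: sub_all bz1.
have bz2' : all (fun c => c < N)%N zs2 by apply: sub_all bz2.
have E : forall r v, (r <= 2)%N -> (v < N)%N ->
    ((if 0 == r then count_mem v ys1 else 0) + ((if 1 == r then count_mem v (evpos zs1) else 0)
      + (if 2 == r then count_mem v (odpos zs1) else 0)))%N =
    ((if 0 == r then count_mem v ys2 else 0) + ((if 1 == r then count_mem v (evpos zs2) else 0)
      + (if 2 == r then count_mem v (odpos zs2) else 0)))%N.
  move=> r v hr hv; rewrite -(cnt_w hr hv by1' bz1') -(cnt_w hr hv by2' bz2'); exact: Hc.
have ey : ys1 = ys2.
  apply: sorted_counts => // v hv; move: (E 0%N v isT hv).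
  by rewrite /= ?addn0 ?add0n.
have ee : evpos zs1 = evpos zs2.
  apply: sorted_counts => //; rewrite ?all_mask // => v hv; move: (E 1%N v isT hv).
  by rewrite /= ?addn0 ?add0n.
have eo : odpos zs1 = odpos zs2.
  apply: sorted_counts => //; rewrite ?all_mask // => v hv; move: (E 2%N v isT hv).
  by rewrite /= ?addn0 ?add0n.
by rewrite /w1 /w2 ey (ev_od_inj ee eo).
Qed.

End Generic.

Section Indep.
Variable D : comNzRingType.

Lemma coef_notin (p : fpoly D) w : w \notin map snd p -> coef p w = 0.
Proof.
elim: p => [|t p IH]; first by rewrite cf_nil.
rewrite /= inE negb_or cf_cons => /andP [ne /IH ->]; rewrite addr0.
by rewrite eq_sym (negbTE ne).
Qed.

Lemma coef_uniq (p : fpoly D) t0 : uniq (map snd p) -> t0 \in p -> coef p t0.2 = t0.1.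
Proof.
elim: p => [|t p IH] //= /andP [nin up]; rewrite inE cf_cons => /orP [/eqP ->|tin].
  by rewrite eqxx coef_notin // addr0.
rewrite IH //; case: eqP => [E|]; last by rewrite add0r.
by move: nin; rewrite E (map_f snd tin).
Qed.

Lemma coef_sum (p : fpoly D) w : \sum_(t <- p) t.1 * (t.2 == w)%:R = coef p w.
Proof.
rewrite /coef [in RHS]big_mkcond; apply: eq_bigr => t _.
by case: (t.2 == w); rewrite ?mulr1 ?mulr0.
Qed.

Theorem independence (p : fpoly D) : uniq (map snd p) -> (forall t, t \in p -> inB t.2) ->
      idealI (coef p) -> forall t, t \in p -> t.1 = 0.
Proof.
move=> up Hb Hi t0 t0p.
pose N := (\max_(t <- p) \max_(x <- t.2) x.2).+1%N.
have Hbnd : forall t, t \in p -> bnd N t.2.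
  move=> t tp; apply/allP => x xt /=; rewrite ltnS.
  apply: leq_trans (leq_bigmax_seq (F := fun x : var => x.2) _ xt isT) _.
  exact: (leq_bigmax_seq (F := fun t : D * word => \max_(x <- t.2) x.2) _ tp isT).
have H0 := idealI_eval (n := (3 * N).+1) Hi (@good_ge D N).
have Hrow : forall t, t \in p ->
    evalW (ge D N) t.2 i0 i0 + evalW (ge D N) t.2 i0 i1 = 'X_[mon N false t.2].
  move=> t /Hb [ys [zs [-> _ _ _]]]; exact: row_sum.
have Hsum : \sum_(t <- p) t.1%:MP * 'X_[mon N false t.2] = 0 :> {mpoly D[(3 * N).+1]}.
  have := congr1 (fun A : 'M_2 => A i0 i0 + A i0 i1) H0.
  rewrite /= !zeroE addr0 /evalP !summxE -big_split /= => H; rewrite -[RHS]H.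
  by apply: eq_big_seq => t tp; rewrite !sclE -mulrDr Hrow.
have := congr1 (mcoeff (mon N false t0.2)) Hsum.
rewrite mcoeff0 raddf_sum /=.
under eq_big_seq => t tp.
  rewrite mcoeffCM mcoeffX.
  have -> : (mon N false t.2 == mon N false t0.2) = (t.2 == t0.2).
    apply/idP/idP => [/eqP E|/eqP -> //].
    move: (Hb t tp) (Hb t0 t0p) (Hbnd t tp) (Hbnd t0 t0p) E.
    move=> [ys1 [zs1 [E1 s1 s2 s3]]] [ys2 [zs2 [E2 s4 s5 s6]]].
    rewrite E1 E2 => b1 b2 E; apply/eqP; exact: (mon_inj s1 s2 s3 s4 s5 s6 b1 b2 E).
  over.
by rewrite coef_sum coef_uniq.
Qed.
End Indep.

Unset Implicit Arguments.

Theorem mainTheorem4 (D : idomainType) (Dinf : forall s : seq D, exists x : D, x \notin s) :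
  (* spanning: every element of D<X> is congruent mod I to a D-combination of B *)
  (forall f : fpoly D, exists p : fpoly D,
      (forall t, t \in p -> inB t.2) /\ idealI (coef (psub f p))) /\
  (* independence: a D-combination of distinct monomials of B lying in I is trivial *)
  (forall p : fpoly D, uniq (map snd p) -> (forall t, t \in p -> inB t.2) ->
      idealI (coef p) -> forall t, t \in p -> t.1 = 0).
Proof.
split; [exact: spanning | exact: independence].
Qed.
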